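(* Let $*$ (revision) and $\div$ (contraction) be operators on belief states satisfying the standing assumptions described in the context. Consider the principle (EHI) for all belief states $\Psi$ and sentences $A,B$: $[(\Psi \div A) * B] = [\Psi * B] \cap [(\Psi * \neg A) * B]$, and the principle (EHIC) for all belief states $\Psi$ and sentences $A,B$: $[(\Psi \div A) \div B] = [\Psi] \cap [\Psi * \neg B] \cap [\Psi * \neg A] \cap [(\Psi * \neg A) * \neg B]$. Then EHI entails EHIC. Moreover, if $*$ satisfies (AGM$*3$) $[\Psi * A] \subseteq \mathrm{Cn}([\Psi] \cup \{A\})$ and the operators satisfy the Levi Identity (LI) $[\Psi * A] = \mathrm{Cn}([\Psi \div \neg A] \cup \{A\})$ for all $\Psi, A$, then EHI and EHIC are equivalent.
   Context: $L$ is a finitely generated propositional language; $\mathrm{Cn}$ denotes classical logical consequence. Belief states $\Psi$ are primitive objects, each determining a deductively closed belief set $[\Psi] \subseteq L$. A revision operator $*$ and a contraction operator $\div$ map a belief state $\Psi$ and a sentence $A$ to belief states $\Psi * A$ and $\Psi \div A$. Standing assumptions: $*$ satisfies the AGM revision postulates, $\div$ satisfies the AGM contraction postulates (in particular, if $\mathrm{Cn}(A)=\mathrm{Cn}(B)$ then $[\Psi \div A] = [\Psi \div B]$ and $[\Psi * A]=[\Psi*B]$), and the Harper Identity holds: $[\Psi \div A] = [\Psi] \cap [\Psi * \neg A]$ for all $\Psi, A$. *)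

(* Defs.v *)
From mathcomp Require Import all_boot.

Set Implicit Arguments.
Unset Strict Implicit.
Unset Printing Implicit Defensive.

Inductive form (At : Type) : Type :=
| Var : At -> form At
| Bot : form At
| Neg : form At -> form At
| And : form At -> form At -> form At
| Or  : form At -> form At -> form At
| Imp : form At -> form At -> form At.

Arguments Bot {At}.

Fixpoint eval (At : Type) (v : At -> bool) (f : form At) : bool :=
  match f with
  | Var a => v a
  | Bot => false
  | Neg g => ~~ eval v g
  | And g h => eval v g && eval v h
  | Or g h => eval v g || eval v h
  | Imp g h => eval v g ==> eval v h
  end.

Definition fset (At : Type) := form At -> Prop.

(* Classical consequence Cn (semantic; equals derivability by soundness and
   completeness of classical propositional logic). *)
Definition Cn (At : Type) (G : fset At) : fset At :=
  fun phi => forall v : At -> bool, (forall psi, G psi -> eval v psi) -> eval v phi.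

Definition sing (At : Type) (A : form At) : fset At := fun phi => phi = A.
Definition cup (At : Type) (X Y : fset At) : fset At := fun phi => X phi \/ Y phi.
Definition cap (At : Type) (X Y : fset At) : fset At := fun phi => X phi /\ Y phi.
Definition subset (At : Type) (X Y : fset At) : Prop := forall phi, X phi -> Y phi.
Definition seteq (At : Type) (X Y : fset At) : Prop := forall phi, X phi <-> Y phi.

Definition equivf (At : Type) (A B : form At) : Prop :=
  seteq (Cn (sing A)) (Cn (sing B)).

Definition consistent_form (At : Type) (A : form At) : Prop :=
  exists v : At -> bool, eval v A.

(* Belief states: an arbitrary type S, with bel : S -> belief set [Psi]. *)

Definition closed_states (At : Type) (S : Type) (bel : S -> fset At) : Prop :=
  forall Psi, subset (Cn (bel Psi)) (bel Psi).

Definition AGM_revision (At : Type) (S : Type) (bel : S -> fset At)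
  (rev : S -> form At -> S) : Prop :=
  (forall Psi A, subset (Cn (bel (rev Psi A))) (bel (rev Psi A))) /\
  (forall Psi A, bel (rev Psi A) A) /\
  (forall Psi A, subset (bel (rev Psi A)) (Cn (cup (bel Psi) (sing A)))) /\
  (forall Psi A, ~ bel Psi (Neg A) ->
     subset (Cn (cup (bel Psi) (sing A))) (bel (rev Psi A))) /\
  (forall Psi A, consistent_form A -> ~ bel (rev Psi A) Bot) /\
  (forall Psi A B, equivf A B -> seteq (bel (rev Psi A)) (bel (rev Psi B))) /\
  (forall Psi A B, subset (bel (rev Psi (And A B)))
                          (Cn (cup (bel (rev Psi A)) (sing B)))) /\
  (forall Psi A B, ~ bel (rev Psi A) (Neg B) ->
     subset (Cn (cup (bel (rev Psi A)) (sing B))) (bel (rev Psi (And A B)))).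

Definition AGM_contraction (At : Type) (S : Type) (bel : S -> fset At)
  (con : S -> form At -> S) : Prop :=
  (forall Psi A, subset (Cn (bel (con Psi A))) (bel (con Psi A))) /\
  (forall Psi A, subset (bel (con Psi A)) (bel Psi)) /\
  (forall Psi A, ~ bel Psi A -> subset (bel Psi) (bel (con Psi A))) /\
  (forall Psi A, ~ Cn (fun _ => False) A -> ~ bel (con Psi A) A) /\
  (forall Psi A, subset (bel Psi) (Cn (cup (bel (con Psi A)) (sing A)))) /\
  (forall Psi A B, equivf A B -> seteq (bel (con Psi A)) (bel (con Psi B))) /\
  (forall Psi A B, subset (cap (bel (con Psi A)) (bel (con Psi B)))
                          (bel (con Psi (And A B)))) /\
  (forall Psi A B, ~ bel (con Psi (And A B)) A ->
     subset (bel (con Psi (And A B))) (bel (con Psi A))).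

Definition HarperIdentity (At : Type) (S : Type) (bel : S -> fset At)
  (rev con : S -> form At -> S) : Prop :=
  forall Psi A, seteq (bel (con Psi A)) (cap (bel Psi) (bel (rev Psi (Neg A)))).

Definition LeviIdentity (At : Type) (S : Type) (bel : S -> fset At)
  (rev con : S -> form At -> S) : Prop :=
  forall Psi A, seteq (bel (rev Psi A)) (Cn (cup (bel (con Psi (Neg A))) (sing A))).

Definition AGM3 (At : Type) (S : Type) (bel : S -> fset At)
  (rev : S -> form At -> S) : Prop :=
  forall Psi A, subset (bel (rev Psi A)) (Cn (cup (bel Psi) (sing A))).

Definition EHI (At : Type) (S : Type) (bel : S -> fset At)
  (rev con : S -> form At -> S) : Prop :=
  forall Psi A B, seteq (bel (rev (con Psi A) B))
                        (cap (bel (rev Psi B)) (bel (rev (rev Psi (Neg A)) B))).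

Definition EHIC (At : Type) (S : Type) (bel : S -> fset At)
  (rev con : S -> form At -> S) : Prop :=
  forall Psi A B, seteq (bel (con (con Psi A) B))
    (cap (cap (cap (bel Psi) (bel (rev Psi (Neg B))))
              (bel (rev Psi (Neg A))))
         (bel (rev (rev Psi (Neg A)) (Neg B)))).

(* Main.v *)
Require Import Defs.
From mathcomp Require Import all_boot.
Require Import Defs.

Section H.
Variable At : Type.

Lemma Cn_mono (X Y : fset At) : subset X Y -> subset (Cn X) (Cn Y).
Proof. move=> H phi HX v Hv; apply: HX => psi /H; apply: Hv. Qed.

Lemma Cn_ext (X Y : fset At) : seteq X Y -> seteq (Cn X) (Cn Y).
Proof. move=> H phi; split; apply: Cn_mono => psi; apply H. Qed.

Lemma cupS_ext (X Y : fset At) B : seteq X Y -> seteq (cup X (sing B)) (cup Y (sing B)).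
Proof. move=> H phi; rewrite /cup; have := H phi; tauto. Qed.

Lemma cap_closed (X Y : fset At) : subset (Cn X) X -> subset (Cn Y) Y ->
  subset (Cn (cap X Y)) (cap X Y).
Proof.
move=> HX HY phi H; split; [apply: HX|apply: HY]; move: phi H;
  apply: Cn_mono => psi []; by [].
Qed.

Lemma ded (X : fset At) B phi : Cn (cup X (sing B)) phi -> Cn X (Imp B phi).
Proof.
move=> H v Hv /=; apply/implyP => HB; apply: H => psi [/Hv //|->//].
Qed.

Lemma key (X1 X2 : fset At) B : subset (Cn X1) X1 -> subset (Cn X2) X2 ->
  seteq (Cn (cup (cap X1 X2) (sing B)))
        (cap (Cn (cup X1 (sing B))) (Cn (cup X2 (sing B)))).
Proof.
move=> H1 H2 phi; split.
  move=> H; split; move: phi H; apply: Cn_mono => psi [[? ?]|?]; by [left|right].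
move=> [Ha Hb].
have I1 := H1 _ (ded _ _ _ Ha); have I2 := H2 _ (ded _ _ _ Hb).
move=> v Hv.
have HB : eval v B by apply: Hv; right.
have : eval v (Imp B phi) by apply: Hv; left.
by rewrite /= HB.
Qed.

Lemma nnB (B : form At) : equivf (Neg (Neg B)) B.
Proof.
move=> phi; split => H v Hv; apply: H => psi ->; have := Hv _ erefl => /=;
  by rewrite negbK.
Qed.
End H.
Arguments Cn_ext {At X Y}. Arguments cupS_ext {At X Y}. Arguments key {At X1 X2}. Arguments nnB {At}. Arguments cap_closed {At X Y}.

Theorem proposition1 (At : finType) (S : Type) (bel : S -> fset At)
  (rev con : S -> form At -> S)
  (Hclosed : closed_states bel)
  (Hrev : AGM_revision bel rev)
  (Hcon : AGM_contraction bel con)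
  (HHI : HarperIdentity bel rev con) :
  (EHI bel rev con -> EHIC bel rev con) /\
  (AGM3 bel rev -> LeviIdentity bel rev con ->
     (EHI bel rev con <-> EHIC bel rev con)).
Proof.
have P1 : EHI bel rev con -> EHIC bel rev con.
  move=> E Psi A B phi.
  have h1 := HHI (con Psi A) B phi; have h2 := HHI Psi A phi;
  have h3 := E Psi A (Neg B) phi.
  move: h1 h2 h3; rewrite /cap; tauto.
split => // _ LI; split => // E Psi A B.
case: Hrev => R1 [R2 [R3 [R4 [R5 [R6 [R7 R8]]]]]].
pose X1 := cap (bel Psi) (bel (rev Psi B)).
pose X2 := cap (bel (rev Psi (Neg A))) (bel (rev (rev Psi (Neg A)) B)).
have C1 : subset (Cn X1) X1 by apply: cap_closed.
have C2 : subset (Cn X2) X2 by apply: cap_closed.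
have NN := nnB B.
have e1 : seteq (bel (con (con Psi A) (Neg B))) (cap X1 X2).
  move=> phi; have h := E Psi A (Neg B) phi.
  have h1 := R6 Psi _ _ NN phi; have h2 := R6 (rev Psi (Neg A)) _ _ NN phi.
  move: h h1 h2; rewrite /X1 /X2 /cap; tauto.
have f1 : seteq (bel (rev Psi B)) (Cn (cup X1 (sing B))).
  move=> phi; apply: iff_trans (LI Psi B phi) _; apply: Cn_ext; apply: cupS_ext => psi.
  have h := HHI Psi (Neg B) psi; have h1 := R6 Psi _ _ NN psi.
  move: h h1; rewrite /X1 /cap; tauto.
have f2 : seteq (bel (rev (rev Psi (Neg A)) B)) (Cn (cup X2 (sing B))).
  move=> phi; apply: iff_trans (LI _ B phi) _; apply: Cn_ext; apply: cupS_ext => psi.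
  have h := HHI (rev Psi (Neg A)) (Neg B) psi;
  have h1 := R6 (rev Psi (Neg A)) _ _ NN psi.
  move: h h1; rewrite /X2 /cap; tauto.
move=> phi; have := LI (con Psi A) B phi; have := Cn_ext (cupS_ext B e1) phi;
have := key B C1 C2 phi; have := f1 phi; have := f2 phi; rewrite /cap; tauto.
Qed.
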